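(* Let $\Gamma$ be a finite group and let $\pi$ be a faithful irreducible unitary representation of $\Gamma$ on a finite-dimensional Hilbert space $\mathsf{H}$. Then there exists $\xi\in\mathsf{H}$ such that the matrix coefficient $g\mapsto\langle\xi,\pi(g)\xi\rangle$ separates the points of $\Gamma$. *)

(* Defs.v *)
From HB Require Import structures.
From mathcomp Require Import all_boot all_order all_algebra all_fingroup all_character.
Set Implicit Arguments. Unset Strict Implicit. Unset Printing Implicit Defensive.
Import GRing.Theory Num.Theory.
Local Open Scope ring_scope.

Definition hdot (C : numClosedFieldType) (n : nat) (u v : 'rV[C]_n) : C :=
  \sum_(i < n) (u 0 i)^* * v 0 i.

Definition unitary_mx (C : numClosedFieldType) (n : nat) (U : 'M[C]_n) : Prop :=
  U *m (map_mx Num.conj U)^T = 1%:M.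

(* Main.v *)
Require Import Defs.
From Stdlib Require Import Classical.
From mathcomp Require Import ring.
From HB Require Import structures.
From mathcomp Require Import all_boot all_order all_algebra all_fingroup all_character.
Import GRing.Theory Num.Theory.
Local Open Scope ring_scope.

Section S.
Variable C : numClosedFieldType.
Variable n : nat.
Implicit Types (u v w : 'rV[C]_n) (M : 'M[C]_n).

Lemma hdotDr u v w : hdot u (v + w) = hdot u v + hdot u w.
Proof. by rewrite /hdot -big_split; apply: eq_bigr => i _; rewrite mxE mulrDr. Qed.
Lemma hdotDl u v w : hdot (u + v) w = hdot u w + hdot v w.
Proof. by rewrite /hdot -big_split; apply: eq_bigr => i _; rewrite mxE rmorphD mulrDl. Qed.
Lemma hdotZr a u v : hdot u (a *: v) = a * hdot u v.
Proof. by rewrite /hdot mulr_sumr; apply: eq_bigr => i _; rewrite mxE mulrCA. Qed.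
Lemma hdotZl a u v : hdot (a *: u) v = a^* * hdot u v.
Proof. by rewrite /hdot mulr_sumr; apply: eq_bigr => i _; rewrite mxE rmorphM mulrA. Qed.
Lemma hdotBr u v w : hdot u (v - w) = hdot u v - hdot u w.
Proof. by rewrite /hdot -sumrB; apply: eq_bigr => i _; rewrite !mxE mulrBr. Qed.

Definition Q M u := hdot u (u *m M).

Lemma nonroot_nat (p : {poly C}) : p != 0 -> exists k : nat, p.[k%:R] != 0.
Proof.
move=> p0.
suff /hasP [k _ Hk] : has (fun k : nat => p.[k%:R] != 0) (iota 0 (size p)) by exists k.
apply/negPn/negP => /hasPn H.
set rs := [seq k%:R | k <- iota 0 (size p)] : seq C.
have Hall : all (root p) rs.
  by apply/allP => x /mapP [k kin ->]; apply/rootP; move: (H k kin); rewrite negbK => /eqP.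
have Hu : uniq rs.
  rewrite map_inj_uniq ?iota_uniq // => a b /eqP; rewrite eqr_nat => /eqP //.
by have := max_poly_roots p0 Hall Hu; rewrite size_map size_iota ltnn.
Qed.

Lemma QDZ M u v c : Q M (u + c *: v) =
  Q M u + c * hdot u (v *m M) + c^* * hdot v (u *m M) + c^* * c * Q M v.
Proof.
rewrite /Q mulmxDl -scalemxAl hdotDl !hdotDr !hdotZl !hdotZr.
by rewrite mulrA !addrA.
Qed.

Lemma hdot_delta a w : hdot (delta_mx 0 a) w = w 0 a.
Proof.
rewrite /hdot (bigD1 a) //= big1 ?addr0.
  by rewrite mxE !eqxx /= conjC_nat mul1r.
by move=> i ia; rewrite mxE (negbTE ia) andbF conjC_nat mul0r.
Qed.

Lemma delta_mulE a b M : hdot (delta_mx 0 a) (delta_mx 0 b *m M) = M b a.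
Proof. by rewrite hdot_delta -rowE mxE. Qed.

Lemma polar M : M != 0 -> exists v, Q M v != 0.
Proof.
move=> M0; apply: NNPP => H.
have HQ v : Q M v = 0.
  by apply/eqP/negPn/negP => Hv; apply: H; exists v.
move/negP: M0; apply; apply/eqP/matrixP => i j; rewrite mxE.
have Hd a : M a a = 0 by rewrite -delta_mulE; exact: HQ.
have Hc c : c * M j i + c^* * M i j = 0.
  have := HQ (delta_mx 0 i + c *: delta_mx 0 j).
  by rewrite QDZ /Q !delta_mulE !Hd mulr0 !addr0 add0r.
have h1 := Hc 1; rewrite rmorph1 !mul1r in h1.
have h2 := Hc 'i; rewrite conjCi mulNr in h2.
have : 'i * (M j i - M i j) = 0 by rewrite mulrBr.
move/eqP; rewrite mulf_eq0 (negbTE (neq0Ci C)) /= subr_eq0 => /eqP E.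
move: h1; rewrite E -mulr2n => /eqP; rewrite mulrn_eq0 /= => /eqP //.
Qed.

Definition pM M u v : {poly C} :=
  (Q M u)%:P + (hdot u (v *m M) + hdot v (u *m M)) *: 'X + (Q M v) *: 'X^2.

Lemma pM_eval M u v (k : nat) : (pM M u v).[k%:R] = Q M (u + k%:R *: v).
Proof.
rewrite QDZ conjC_nat /pM !hornerD hornerC !hornerZ hornerX hornerXn.
rewrite mulrDl !addrA expr2; ring.
Qed.

Lemma pM_neq0 M u v : (Q M u != 0) || (Q M v != 0) -> pM M u v != 0.
Proof.
have c0 : (pM M u v)`_0 = Q M u.
  by rewrite /pM !coefD !coefZ coefC coefX coefXn /= !mulr0 !addr0.
have c2 : (pM M u v)`_2 = Q M v.
  by rewrite /pM !coefD !coefZ coefC coefX coefXn /= mulr0 mulr1 !add0r.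
case/orP => H; apply/negP => /eqP E; move: H.
  by rewrite -c0 E coef0 eqxx.
by rewrite -c2 E coef0 eqxx.
Qed.

Lemma extend (Ms : seq 'M[C]_n) A u v :
  all (fun M => Q M u != 0) Ms -> Q A v != 0 ->
  exists k : nat, all (fun M => Q M (u + k%:R *: v) != 0) (A :: Ms).
Proof.
move=> HMs HA.
have P0 : \prod_(M <- A :: Ms) pM M u v != 0.
  rewrite prodf_seq_neq0 /= pM_neq0 ?HA ?orbT //=.
  by apply/allP => M /(allP HMs) HM; rewrite pM_neq0 ?HM.
have [k Hk] := nonroot_nat _ P0.
exists k; move: Hk; rewrite horner_prod prodf_seq_neq0.
by apply: sub_all => M /=; rewrite pM_eval.
Qed.

Lemma exists_good (Ms : seq 'M[C]_n) :
  all (fun M => M != 0) Ms -> exists u, all (fun M => Q M u != 0) Ms.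
Proof.
elim: Ms => [|A Ms IH] /=; first by exists 0.
case/andP => A0 /IH [u Hu].
have [v Hv] := polar _ A0.
have [k Hk] := extend _ _ _ _ Hu Hv.
by exists (u + k%:R *: v).
Qed.

End S.

Theorem proposition6p1 (C : numClosedFieldType) (gT : finGroupType)
    (G : {group gT}) (n : nat) (rG : mx_representation C G n) :
  (forall g, g \in G -> unitary_mx (rG g)) ->
  mx_faithful rG ->
  mx_irreducible rG ->
  exists xi : 'rV[C]_n,
    {in G &, injective (fun g : gT => hdot xi (xi *m rG g^-1%g))}.
Proof.
move=> _ ffl _.
have inj := mx_faithful_inj ffl.
set Ms := [seq rG x.1^-1%g - rG x.2^-1%g | x <- enum [pred x : gT * gT | (x.1 \in G) && (x.2 \in G) && (x.1 != x.2)]].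
have [|u Hu] := @exists_good C n Ms.
  apply/allP => M /mapP [[g h]]; rewrite mem_enum /= => /andP [/andP [gG hG] gh] ->.
  rewrite subr_eq0; apply/negP => /eqP /inj; rewrite !groupV => /(_ gG hG) /invg_inj E.
  by rewrite E eqxx in gh.
exists u => g h gG hG /= E; apply/eqP/negPn/negP => gh.
have : (rG g^-1%g - rG h^-1%g) \in Ms.
  by apply/mapP; exists (g, h); rewrite // mem_enum inE /= gG hG gh.
move/(allP Hu); rewrite /Q mulmxBr hdotBr.
by move: E => /= ->; rewrite subrr eqxx.
Qed.
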